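(* Assume the standing setting of the context. Let $(\varepsilon_k)_k$ be a positive sequence with $\varepsilon_k\to0$ and let $x^*(\varepsilon_k)$ be the unique Nash equilibrium of NEP($\varepsilon_k$). Then every accumulation point of $(x^*(\varepsilon_k))_k$ is a Nash equilibrium of the nonsmooth NEP, and therefore of the multi-leader-follower game.
   Context: Standing setting: $N\ge1$, $x=(x_1,\dots,x_N)\in\mathbb{R}^n$, $x_\nu\in\mathbb{R}^{n_\nu}$, $x_{-\nu}$ = all components other than $x_\nu$. For each $\nu$: $Q_\nu$ symmetric positive definite, $c_\nu\in\mathbb{R}^{n_\nu}$, $X_\nu=\{x_\nu:g_\nu(x_\nu)\le0\}$ nonempty, convex, closed with $g_\nu$ convex and at least twice differentiable; $X=X_1\times\dots\times X_N$; $a\in\mathbb{R}^m$, $a\ge0$; $Q_y\in\mathbb{R}^{m\times m}$ positive definite diagonal; $B,L\in\mathbb{R}^{n\times m}$. For $\varepsilon>0$, $\tilde\phi_\varepsilon:\mathbb{R}\to\mathbb{R}$ is convex and at least twice differentiable (applied componentwise), and $\phi_\varepsilon(\alpha,\beta)=\alpha+\beta-\tilde\phi_\varepsilon(\alpha-\beta)$ is a smooth NCP function continuous in $\varepsilon$, where at $\varepsilon=0$ it is the nonsmooth NCP function, i.e. $\tilde\phi_0(t)=|t|$ and $(t,\varepsilon)\mapsto\tilde\phi_\varepsilon(t)$ is continuous on $\mathbb{R}\times[0,\infty)$ (example: $\tilde\phi_\varepsilon(t)=\sqrt{t^2+4\varepsilon^2}$). NEP($\varepsilon$), $\varepsilon>0$: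 player $\nu$ solves $\min_{x_\nu\in X_\nu}\theta^\varepsilon_\nu(x)=\tfrac12 x_\nu^\top Q_\nu x_\nu+c_\nu^\top x_\nu+\tfrac12\sum_i a_i[(L^\top+Q_y^{-1}B^\top)x+\tilde\phi_\varepsilon((L^\top-Q_y^{-1}B^\top)x)]_i$; it has a unique Nash equilibrium $x^*(\varepsilon)$. Nonsmooth NEP: player $\nu$ solves $\min_{x_\nu\in X_\nu}\theta_\nu(x)=\tfrac12 x_\nu^\top Q_\nu x_\nu+c_\nu^\top x_\nu+\sum_i a_i\max\{(Q_y^{-1}B^\top x)_i,(L^\top x)_i\}$. It is equivalent to the multi-leader-follower game in which, given $x$, the follower solves $\min_y\tfrac12 y^\top Q_y y-(B^\top x)^\top y$ s.t. $y\ge L^\top x$ (unique solution $y(x)=\max\{Q_y^{-1}B^\top x,L^\top x\}$) and leader $\nu$ minimizes $\tfrac12 x_\nu^\top Q_\nu x_\nu+c_\nu^\top x_\nu+a^\top y(x)$ over $X_\nu$. A Nash equilibrium is $x^*\in X$ such that each $x^*_\nu$ minimizes player $\nu$'s objective over $X_\nu$ with $x_{-\nu}=x^*_{-\nu}$. *)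

(* Defs.v *)
From HB Require Import structures.
From mathcomp Require Import all_boot all_order all_algebra.
From mathcomp Require Import all_classical all_reals all_analysis.
Set Implicit Arguments. Unset Strict Implicit. Unset Printing Implicit Defensive.
Import Order.TTheory GRing.Theory Num.Theory.
Import numFieldNormedType.Exports.
Local Open Scope classical_set_scope.
Local Open Scope ring_scope.

Section NashDefs.
Variable R : realType.

Definition sc (A : 'M[R]_1) : R := A ord0 ord0.

Definition qform k (Q : 'M[R]_k) (v : 'cV[R]_k) : R := sc (v^T *m Q *m v).

Definition sym_posdef k (Q : 'M[R]_k) : Prop :=
  Q^T = Q /\ forall v : 'cV[R]_k, v != 0 -> 0 < qform Q v.

Definition posdef_diag k (Q : 'M[R]_k) : Prop :=
  is_diag_mx Q /\ forall v : 'cV[R]_k, v != 0 -> 0 < qform Q v.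

Definition convex_fun k p (g : 'cV[R]_k -> 'cV[R]_p) : Prop :=
  forall (u v : 'cV[R]_k) (t : R), 0 <= t <= 1 ->
    forall j, g (t *: u + (1 - t) *: v) j ord0
              <= t * g u j ord0 + (1 - t) * g v j ord0.

Definition convex_fun1 (f : R -> R) : Prop :=
  forall u v t : R, 0 <= t <= 1 -> f (t * u + (1 - t) * v) <= t * f u + (1 - t) * f v.

Definition convex_setv k (S : set 'cV[R]_k) : Prop :=
  forall u v t, S u -> S v -> 0 <= t <= 1 -> S (t *: u + (1 - t) *: v).

Definition twice_diff (V W : normedModType R) (f : V -> W) : Prop :=
  (forall x, differentiable f x) /\
  (forall (v x : V), differentiable (fun y => derive f y v) x).

(* smoothing family: phit e t = \tilde\phi_e(t) *)
Definition smoothing_family (phit : R -> R -> R) : Prop :=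
  (forall e, 0 < e -> convex_fun1 (phit e) /\ @twice_diff R^o R^o (phit e)) /\
  (forall t, phit 0 t = `|t|) /\
  {within [set q : R * R | 0 <= q.2], continuous (fun q : R * R => phit q.2 q.1)}.

Variables (N : nat) (nv : 'I_N -> nat) (m : nat).

(* total dimension n = \sum_nu n_nu ; x = (x_1, ..., x_N) stacked *)
Definition ntot := (\sum_(nu < N) nv nu)%N.

Definition blk (x : 'cV[R]_ntot) (nu : 'I_N) : 'cV[R]_(nv nu) :=
  @submxcol R N nv 1 x nu.

Definition upd (x : 'cV[R]_ntot) (nu : 'I_N) (z : 'cV[R]_(nv nu)) : 'cV[R]_ntot :=
  @mxcol R N nv 1 (@dfwith _ (fun mu : 'I_N => 'M[R]_(nv mu, 1)) (fun mu => blk x mu) nu z).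

Unset Implicit Arguments.
Variables (Q : forall nu : 'I_N, 'M[R]_(nv nu)) (c : forall nu : 'I_N, 'cV[R]_(nv nu))
  (Xs : forall nu : 'I_N, set 'cV[R]_(nv nu))
  (a : 'cV[R]_m) (Qy : 'M[R]_m) (B L : 'M[R]_(ntot, m)).
Set Implicit Arguments.

Definition inX (x : 'cV[R]_ntot) : Prop := forall nu : 'I_N, Xs nu (blk x nu).

Definition own_cost (nu : 'I_N) (x : 'cV[R]_ntot) : R :=
  qform (Q nu) (blk x nu) / 2 + sc ((c nu)^T *m blk x nu).

Definition theta_eps (phit : R -> R -> R) (eps : R) (nu : 'I_N) (x : 'cV[R]_ntot) : R :=
  own_cost nu x + (\sum_(i < m) a i ord0 *
     (((L^T + invmx Qy *m B^T) *m x) i ord0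
      + map_mx (phit eps) ((L^T - invmx Qy *m B^T) *m x) i ord0)) / 2.

Definition theta (nu : 'I_N) (x : 'cV[R]_ntot) : R :=
  own_cost nu x + \sum_(i < m) a i ord0 *
     Num.max ((invmx Qy *m B^T *m x) i ord0) ((L^T *m x) i ord0).

Definition NashEq (obj : 'I_N -> 'cV[R]_ntot -> R) (x : 'cV[R]_ntot) : Prop :=
  inX x /\ forall (nu : 'I_N) (z : 'cV[R]_(nv nu)), Xs nu z -> obj nu x <= obj nu (upd x z).

Definition follower_feas (x : 'cV[R]_ntot) (y : 'cV[R]_m) : Prop :=
  forall i, (L^T *m x) i ord0 <= y i ord0.

Definition follower_obj (x : 'cV[R]_ntot) (y : 'cV[R]_m) : R :=
  qform Qy y / 2 - sc ((B^T *m x)^T *m y).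

Definition follower_sol (x : 'cV[R]_ntot) (y : 'cV[R]_m) : Prop :=
  follower_feas x y /\
  forall y', follower_feas x y' -> follower_obj x y <= follower_obj x y'.

Definition leader_obj (nu : 'I_N) (x : 'cV[R]_ntot) (y : 'cV[R]_m) : R :=
  own_cost nu x + sc (a^T *m y).

(* Nash equilibrium of the multi-leader-follower game: the follower response
   (any, in fact the unique, solution of the follower's problem) is plugged in *)
Definition MLF_NashEq (x : 'cV[R]_ntot) : Prop :=
  inX x /\ forall (nu : 'I_N) (z : 'cV[R]_(nv nu)), Xs nu z ->
    forall y y', follower_sol x y -> follower_sol (upd x z) y' ->
      leader_obj nu x y <= leader_obj nu (upd x z) y'.

End NashDefs.

(* Main.v *)
Require Import Defs.
From HB Require Import structures.
From mathcomp Require Import all_boot all_order all_algebra.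
From mathcomp Require Import all_classical all_reals all_analysis.
Import Order.TTheory GRing.Theory Num.Theory.
Import numFieldNormedType.Exports.
Local Open Scope classical_set_scope.
Local Open Scope ring_scope.
From mathcomp Require Import ring lra.
Section S.
Variable R : realType.
Lemma mx_cont (T : topologicalType) m n (f : T -> 'M[R]_(m,n)) :
  (forall i j, continuous (fun t => f t i j)) -> continuous f.
Proof.
move=> fc t A [P /= Pn sPA].
have : \forall s \near t, forall i j, P i j (f s i j).
  apply: filter_forall => i; apply: filter_forall => j.
  exact: (fc i j t _ (Pn i j)).
by apply: filterS => s H; exact: sPA.
Qed.

Definition ec (T : topologicalType) m n (f : T -> 'M[R]_(m,n)) :=
  forall i j, continuous (fun t => f t i j).
Arguments ec {T m n} f.

Lemma cvg_sumR (T : topologicalType) (p : T) k (F : 'I_k -> T -> R) :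
  (forall i, {for p, continuous (F i)}) ->
  {for p, continuous (fun t => \sum_(i < k) F i t)}.
Proof.
move=> h; apply: cvg_big => //; first exact: add_continuous.
by move=> i _; exact: h.
Qed.

Lemma ec_mul (T : topologicalType) m n l (f : T -> 'M[R]_(m,n)) (g : T -> 'M[R]_(n,l)) :
  ec f -> ec g -> ec (fun t => f t *m g t).
Proof.
move=> hf hg i j.
have -> : (fun t => (f t *m g t) i j) = (fun t => \sum_(k < n) f t i k * g t k j).
  by apply/funext => t; rewrite mxE.
move=> t; apply: cvg_sumR => k; apply: cvgM; [exact: hf | exact: hg].
Qed.

Lemma ec_tr (T : topologicalType) m n (f : T -> 'M[R]_(m,n)) : ec f -> ec (fun t => (f t)^T).
Proof.
move=> hf i j.
have -> : (fun t => (f t)^T i j) = (fun t => f t j i) by apply/funext => t; rewrite mxE.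
exact: hf.
Qed.

Lemma ec_cst (T : topologicalType) m n (M : 'M[R]_(m,n)) : ec (fun _ : T => M).
Proof. by move=> i j; exact: cst_continuous. Qed.

Lemma ec_add (T : topologicalType) m n (f g : T -> 'M[R]_(m,n)) : ec f -> ec g -> ec (fun t => f t + g t).
Proof.
move=> hf hg i j.
have -> : (fun t => (f t + g t) i j) = (fun t => f t i j + g t i j) by apply/funext => t; rewrite mxE.
move=> t; apply: cvgD; [exact: hf | exact: hg].
Qed.

Lemma ec_fst m n : ec (fun q : 'M[R]_(m,n) * R => q.1).
Proof.
move=> i j q; apply: (continuous_comp (f := fst) (g := fun M : 'M[R]_(m,n) => M i j)).
  exact: cvg_fst.
exact: coord_continuous.
Qed.

Lemma ec_comp (T U : topologicalType) m n (f : U -> 'M[R]_(m,n)) (h : T -> U) :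
  ec f -> continuous h -> ec (fun t => f (h t)).
Proof. move=> hf hh i j t; exact: (continuous_comp (hh t) (hf i j (h t))). Qed.

Lemma ec_cont (T : topologicalType) m n (f : T -> 'M[R]_(m,n)) : ec f -> continuous f.
Proof. exact: mx_cont. Qed.

Lemma ec_blk (T : topologicalType) N (nv : 'I_N -> nat) (f : T -> 'cV[R]_(ntot nv)) nu :
  ec f -> ec (fun t => blk (f t) nu).
Proof.
move=> hf i j.
have -> : (fun t => blk (f t) nu i j) = (fun t => f t (tagnat.Rank nu i) j).
  by apply/funext => t; rewrite /blk /submxcol mxE.
exact: hf.
Qed.

Lemma ec_upd (T : topologicalType) N (nv : 'I_N -> nat) (f : T -> 'cV[R]_(ntot nv)) nu
  (z : 'cV[R]_(nv nu)) :
  ec f -> ec (fun t => upd (f t) z).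
Proof.
move=> hf i j.
have -> : (fun t => upd (f t) z i j) = (fun t => @dfwith _ (fun mu : 'I_N => 'M[R]_(nv mu, 1)) (fun mu => blk (f t) mu) nu z (tagnat.sig1 i) (tagnat.sig2 i) j).
  by apply/funext => t; rewrite /upd /mxcol mxE.
rewrite /dfwith.
case: (nu =P tagnat.sig1 i) => [e|ne].
  exact: cst_continuous.
exact: ec_blk.
Qed.
Arguments ec_mul {T m n l f g}.
Arguments ec_tr {T m n f}.
Arguments ec_cst {T m n} M.
Arguments ec_add {T m n f g}.
Arguments ec_comp {T U m n f h}.
Arguments ec_blk {T N nv f} nu.
Arguments ec_upd {T N nv f nu} z.
Lemma within_comp (T U W : topologicalType) (S : set U) (phi : U -> W) (h : T -> U) p :
 {within S, continuous phi} -> (forall q, S (h q)) -> {for p, continuous h} ->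
 {for p, continuous (fun t => phi (h t))}.
Proof.
move=> phic0 hS hc A nA.
have phic := (proj1 (subspace_continuousP _ _) phic0).
have H := phic (h p) (hS p) A nA.
have := hc _ H.
rewrite !nbhs_simpl /=.
by apply: filterS => t /= HH; apply: HH; exact: hS.
Qed.

Lemma theta_eps_cont (T : topologicalType) N (nv : 'I_N -> nat) m Q c a Qy B L phit nu
  (X : T -> 'cV[R]_(ntot nv)) (E : T -> R) p :
  smoothing_family phit -> ec X -> continuous E -> (forall t, 0 <= E t) ->
  {for p, continuous (fun t => @theta_eps R N nv m Q c a Qy B L phit (E t) nu (X t))}.
Proof.
move=> [_ [_ phic]] hX hE hE0.
rewrite /theta_eps /own_cost /qform /sc.
have hb := ec_blk nu hX.
apply: cvgD.
  apply: cvgD.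
    apply: cvgM; last exact: cvg_cst.
    exact: (ec_mul (ec_mul (ec_tr hb) (ec_cst _)) hb ord0 ord0 p).
  exact: (ec_mul (ec_cst _) hb ord0 ord0 p).
apply: cvgM; last exact: cvg_cst.
apply: cvg_sumR => i.
apply: cvgM; first exact: cvg_cst.
apply: cvgD.
  exact: (ec_mul (ec_cst _) hX i ord0 p).
have -> : (fun t => map_mx (phit (E t)) ((L^T - invmx Qy *m B^T) *m X t) i ord0)
   = (fun t => (fun q : R * R => phit q.2 q.1) (((L^T - invmx Qy *m B^T) *m X t) i ord0, E t)).
  by apply/funext => t; rewrite mxE.
rewrite [X in _ --> X]mxE.
apply: (@within_comp T _ _ _ _ (fun t => (((L^T - invmx Qy *m B^T) *m X t) i ord0, E t)) p phic).
  by move=> t /=; exact: hE0.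
apply: (@cvg_pair _ _ _ _ (nbhs (((L^T - invmx Qy *m B^T) *m X p) i ord0)) (nbhs (E p))); last exact: (hE p).
exact: (ec_mul (ec_cst _) hX i ord0 p).
Qed.
Lemma max_half (u w : R) : (u + w + `|u - w|) / 2 = Num.max w u.
Proof.
case: (leP w u) => h.
  by rewrite ger0_norm ?subr_ge0 //; field.
by rewrite ltr0_norm ?subr_lt0 //; field.
Qed.

Lemma theta0 N (nv : 'I_N -> nat) m Q c a Qy B L phit nu x :
  smoothing_family phit ->
  @theta_eps R N nv m Q c a Qy B L phit 0 nu x = theta Q c a Qy B L nu x.
Proof.
move=> [_ [ph0 _]].
rewrite /theta_eps /theta; congr (_ + _).
have eA : forall (A C : 'cV[R]_m) i, (A + C) i ord0 = A i ord0 + C i ord0 by move=> *; rewrite mxE.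
have eB : forall (A C : 'cV[R]_m) i, (A - C) i ord0 = A i ord0 - C i ord0 by move=> *; rewrite !mxE.
rewrite mulr_suml; apply: eq_bigr => i _.
have eM : forall (A : 'cV[R]_m) (f : R -> R) i, map_mx f A i ord0 = f (A i ord0) by move=> *; rewrite mxE.
rewrite mulmxDl mulmxBl eA eM eB ph0 -mulrA; congr (_ * _).
by rewrite max_half.
Qed.

Lemma cluster_ge0 (Vt : topologicalType) (xk : nat -> Vt) xbar (eps : nat -> R) (G : Vt * R -> R) :
  {for (xbar, 0), continuous G} -> (forall k, 0 <= G (xk k, eps k)) ->
  eps @ \oo --> 0 -> cluster (xk @ \oo) xbar -> 0 <= G (xbar, 0).
Proof.
move=> Gc Gk epsc hcl.
rewrite leNgt; apply/negP => Hlt.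
have := cvgr_lt _ Gc _ Hlt.
case=> [[U V] [/= nU nV] sUV].
have eV : \forall k \near \oo, V (eps k) by apply: epsc.
have [y [[k Vk <-] Uy]] := hcl (xk @` [set k | V (eps k)]) U
  (filterS (fun k (h : V (eps k)) => ex_intro2 _ _ k h erefl) eV) nU.
have := sUV (xk k, eps k) (conj Uy Vk) => /=.
by rewrite ltNge Gk.
Qed.
Lemma cluster_closed (Vt W : topologicalType) (xk : nat -> Vt) xbar (C : set W) (f : Vt -> W) :
  closed C -> continuous f -> (forall k, C (f (xk k))) -> cluster (xk @ \oo) xbar -> C (f xbar).
Proof.
move=> cC fc hk hcl; apply: cC => B nB.
have hr : \forall k \near \oo, range xk (xk k) by apply: nearW => k; exists k.
have [y [[k _ <-] By]] := hcl _ _ hr (fc _ _ nB).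
by exists (f (xk k)).
Qed.

Lemma qform_diag m (Qy : 'M[R]_m) y : is_diag_mx Qy ->
  qform Qy y = \sum_i Qy i i * (y i ord0) ^+ 2.
Proof.
move=> hd; rewrite /qform /sc mxE; apply: eq_bigr => k _.
rewrite mxE (bigD1 k) //= big1 ?addr0.
  by rewrite mxE expr2; ring.
by move=> l lk; move/is_diag_mxP: hd => hd; rewrite hd ?mulr0.
Qed.

Lemma diag_pos m (Qy : 'M[R]_m) : posdef_diag Qy -> forall i, 0 < Qy i i.
Proof.
move=> [hd hp] i.
have nz : (delta_mx i ord0 : 'cV[R]_m) != 0.
  apply/eqP => /matrixP /(_ i ord0); rewrite !mxE !eqxx /=.
  by apply/eqP; exact: oner_neq0.
have := hp _ nz; rewrite qform_diag // (bigD1 i) //= big1 ?addr0.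
  by rewrite mxE !eqxx /= expr1n mulr1.
by move=> l li; rewrite mxE (negbTE li) /= expr0n /= mulr0.
Qed.

Lemma Qy_unit m (Qy : 'M[R]_m) : posdef_diag Qy -> Qy \in unitmx.
Proof.
move=> hQ; have hd := hQ.1; have hp := @diag_pos _ _ hQ.
have -> : Qy = diag_mx (\row_i Qy i i).
  apply/matrixP => i j; rewrite !mxE; case: (eqVneq i j) => [->|ne].
    by rewrite mulr1n.
  by move/is_diag_mxP: hd => hd; rewrite mulr0n hd.
rewrite unitmxE det_diag unitfE; apply/prodf_neq0 => i _.
by rewrite mxE; apply: lt0r_neq0.
Qed.

Lemma invmx_entry m (Qy : 'M[R]_m) (b : 'cV[R]_m) i : posdef_diag Qy ->
  Qy i i * (invmx Qy *m b) i ord0 = b i ord0.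
Proof.
move=> hQ; have hd := hQ.1.
have := mulKVmx (@Qy_unit _ _ hQ) b; move/matrixP/(_ i ord0).
rewrite mxE (bigD1 i) //= big1 ?addr0 //.
by move=> l li; move/is_diag_mxP: hd => hd; rewrite hd ?mul0r // eq_sym.
Qed.

Lemma scal_key (d w l yv : R) : 0 < d -> l <= yv ->
  d / 2 * (yv - Num.max w l) ^+ 2 <=
  (d * yv ^+ 2 / 2 - d * w * yv) - (d * (Num.max w l) ^+ 2 / 2 - d * w * Num.max w l).
Proof.
move=> hd hl; set s := Num.max w l.
have h2 : 0 <= (yv - s) * (s - w).
  rewrite /s; case: (leP w l) => h.
    by rewrite mulr_ge0 // subr_ge0.
  by rewrite subrr mulr0.
have -> : (d * yv ^+ 2 / 2 - d * w * yv) - (d * s ^+ 2 / 2 - d * w * s)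
   = d / 2 * (yv - s) ^+ 2 + d * ((yv - s) * (s - w)) by field.
by rewrite lerDl mulr_ge0 // ltW.
Qed.

Lemma follower_char N (nv : 'I_N -> nat) m (Qy : 'M[R]_m) B L (x : 'cV[R]_(ntot nv)) y :
  posdef_diag Qy -> follower_sol Qy B L x y ->
  forall i, y i ord0 = Num.max ((invmx Qy *m B^T *m x) i ord0) ((L^T *m x) i ord0).
Proof.
move=> hQ [feas opt].
have hd := hQ.1; have hp := @diag_pos _ _ hQ.
set w := invmx Qy *m B^T *m x; set l := L^T *m x; set b := B^T *m x.
have hw : forall i, b i ord0 = Qy i i * w i ord0.
  by move=> i; rewrite /w -mulmxA invmx_entry.
pose s : 'cV[R]_m := \col_i Num.max (w i ord0) (l i ord0).
have fs : follower_feas L x s.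
  move=> j; rewrite /s [X in _ <= X]mxE; case: (leP (w j ord0) (l j ord0)) => // h; exact: ltW.
have := opt s fs.
have sc_dot : forall v : 'cV[R]_m, sc ((B^T *m x)^T *m v) = \sum_k b k ord0 * v k ord0.
  by move=> v; rewrite /sc mxE; apply: eq_bigr => k _; rewrite mxE.
rewrite /follower_obj !qform_diag // !sc_dot.
have E1 : forall v : 'cV[R]_m, (\sum_k Qy k k * v k ord0 ^+ 2) / 2 - \sum_k b k ord0 * v k ord0
    = \sum_k (Qy k k * v k ord0 ^+ 2 / 2 - b k ord0 * v k ord0).
  by move=> v; rewrite mulr_suml -sumrB.
rewrite !E1 -subr_le0 -sumrB => Hle.
pose F k := (Qy k k * y k ord0 ^+ 2 / 2 - b k ord0 * y k ord0)
          - (Qy k k * s k ord0 ^+ 2 / 2 - b k ord0 * s k ord0).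
have fge : forall k, Qy k k / 2 * (y k ord0 - s k ord0) ^+ 2 <= F k.
  move=> k; rewrite /F hw /s mxE.
  exact: scal_key (hp k) (feas k).
have f0 : forall k, 0 <= F k.
  move=> k; apply: le_trans (fge k).
  by rewrite mulr_ge0 ?sqr_ge0 // divr_ge0 // ltW.
have Hsum0 : \sum_k F k = 0.
  by apply/le_anti; rewrite Hle sumr_ge0 // => k _; exact: f0.
move=> i.
have Fi : F i = 0 := psumr_eq0P (fun k _ => f0 k) Hsum0 isT.
have := fge i; rewrite Fi pmulr_rle0 ?divr_gt0 // => H.
have : (y i ord0 - s i ord0) ^+ 2 == 0 by rewrite eq_le H sqr_ge0.
by rewrite sqrf_eq0 subr_eq0 => /eqP ->; rewrite /s mxE.
Qed.
Lemma ec_id m n : ec (fun x : 'M[R]_(m,n) => x).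
Proof. move=> i j; exact: coord_continuous. Qed.

Lemma abs_snd_cont (V : topologicalType) : continuous (fun q : V * R => `|q.2|).
Proof.
move=> q; apply: (continuous_comp (f := snd) (g := fun r : R => `|r|)).
  exact: cvg_snd.
exact: norm_continuous.
Qed.
End S.

Theorem mainTheorem8 (R : realType) (N : nat) (nv : 'I_N -> nat)
  (Q : forall nu : 'I_N, 'M[R]_(nv nu)) (c : forall nu : 'I_N, 'cV[R]_(nv nu))
  (p : 'I_N -> nat) (g : forall nu : 'I_N, 'cV[R]_(nv nu) -> 'cV[R]_(p nu))
  (m : nat) (a : 'cV[R]_m) (Qy : 'M[R]_m) (B L : 'M[R]_(ntot nv, m))
  (phit : R -> R -> R)
  (eps : nat -> R) (xk : nat -> 'cV[R]_(ntot nv)) :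
  (0 < N)%N ->
  (forall nu, sym_posdef (Q nu)) ->
  (forall nu, convex_fun (g nu) /\ twice_diff (g nu)) ->
  let Xs := fun nu : 'I_N => [set z : 'cV[R]_(nv nu) | forall j, g nu z j ord0 <= 0] in
  (forall nu, Xs nu !=set0 /\ convex_setv (Xs nu) /\ closed (Xs nu)) ->
  (forall i, 0 <= a i ord0) ->
  posdef_diag Qy ->
  smoothing_family phit ->
  (forall k, 0 < eps k) ->
  eps @ \oo --> 0 ->
  (forall k, NashEq Xs (theta_eps Q c a Qy B L phit (eps k)) (xk k) /\
             forall x', NashEq Xs (theta_eps Q c a Qy B L phit (eps k)) x' -> x' = xk k) ->
  forall xbar, cluster (xk @ \oo) xbar ->
    NashEq Xs (theta Q c a Qy B L) xbar /\ MLF_NashEq Q c Xs a Qy B L xbar.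
Proof.
move=> N0 hQ hg Xs hX ha hQy hphi heps epsc hxk xbar hcl.
have NE : NashEq Xs (theta Q c a Qy B L) xbar.
  split.
    move=> nu.
    have := @cluster_closed _ _ xk xbar (Xs nu) (fun x => blk x nu). move=> H; apply: H.
    - exact: (hX nu).2.2.
    - apply: ec_cont; exact: (@ec_blk R _ N nv (fun x => x) nu (@ec_id R _ _)).
    - by move=> k; exact: ((hxk k).1.1 nu).
    - exact: hcl.
  move=> nu z hz.
  pose G (q : 'cV[R]_(ntot nv) * R) :=
    theta_eps Q c a Qy B L phit `|q.2| nu (upd q.1 z)
    - theta_eps Q c a Qy B L phit `|q.2| nu q.1.
  have h1 := (@theta_eps_cont R _ N nv m Q c a Qy B L phit nu (fun q => upd q.1 z) (fun q => `|q.2|) (xbar, 0) hphi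
        (@ec_upd R _ N nv (fun q : 'cV[R]_(ntot nv) * R => q.1) nu z (@ec_fst R _ _))
        (abs_snd_cont _ _) (fun t => normr_ge0 _)).
  have h2 := (@theta_eps_cont R _ N nv m Q c a Qy B L phit nu (fun q => q.1) (fun q => `|q.2|) (xbar, 0) hphi
        (@ec_fst R _ _) (abs_snd_cont _ _) (fun t => normr_ge0 _)).
  have Gc : {for (xbar, 0), continuous G} by exact: (cvgB h1 h2).
  have Gk : forall k, 0 <= G (xk k, eps k).
    move=> k; rewrite /G /= gtr0_norm // subr_ge0.
    exact: ((hxk k).1.2 nu z hz).
  have := @cluster_ge0 R _ xk xbar eps G Gc Gk epsc hcl.
  by rewrite /G /= normr0 !theta0 // subr_ge0.
split => //; split; first exact: NE.1.
move=> nu z hz y y' hy hy'.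
have eq1 : forall x yy, follower_sol Qy B L x yy -> leader_obj Q c a nu x yy = theta Q c a Qy B L nu x.
  move=> x yy hyy; rewrite /leader_obj /theta /sc mxE; congr (_ + _).
  by apply: eq_bigr => i _; rewrite mxE (@follower_char R _ _ _ _ _ _ _ _ hQy hyy i).
rewrite (eq1 _ _ hy) (eq1 _ _ hy').
exact: (NE.2 nu z hz).
Qed.
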